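(* Let $M$ be a tabular MDP with finite $\mathcal S,\mathcal A$, discount $\gamma\in(0,1)$, and reward $r(\cdot;\theta^* )$ with $|r(s,a;\theta^* )|\le R_{\max}$. Let $P^*$ and $\tilde P$ be two transition models, and let $Q^*,\tilde Q$ be the fixed points of the soft Bellman update using $P^*$ and $\tilde P$ respectively, with policies $\pi^*(a\mid s;\theta^* )\propto\exp(Q^*(s,a;\theta^* ))$ and $\tilde\pi(a\mid s;\theta^* )\propto\exp(\tilde Q(s,a;\theta^* ))$. Let $\Delta_P=\sup_{s,a}\|P^*(\cdot\mid s,a)-\tilde P(\cdot\mid s,a)\|_1$. Then $$\mathbb E_{s\sim w^*}\big[D_{\mathrm{KL}}(\pi^*(\cdot\mid s;\theta^* )\,\|\,\tilde\pi(\cdot\mid s;\theta^* ))\big]\le\frac{2|\mathcal A|R_{\max}}{(1-\gamma)^2}\,\Delta_P .$$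
   Context: The soft Bellman update with transition model $P$ and discount $\gamma$ is $Q(s,a;\theta)=r(s,a;\theta)+\gamma\sum_{s'}P(s'\mid s,a)V(s';\theta)$, $V(s;\theta)=\log\sum_{a\in\mathcal A}\exp(Q(s,a;\theta))$. $w^*$ is the discounted stationary state distribution of $\pi^*$ (under the true MDP). *)

(* Defs.v *)
From HB Require Import structures.
From mathcomp Require Import all_boot all_order all_algebra.
From mathcomp Require Import all_classical all_reals all_analysis.
Set Implicit Arguments. Unset Strict Implicit. Unset Printing Implicit Defensive.
Import Order.TTheory GRing.Theory Num.Theory.
Local Open Scope ring_scope.

Section MDP.
Variables (R : realType) (S A : finType).

(* a transition model: P s a s' = P(s' | s, a) *)
Definition is_transition (P : S -> A -> S -> R) : Prop :=
  forall s a, (forall s', 0 <= P s a s') /\ \sum_(s' : S) P s a s' = 1.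

Definition is_distribution (mu : S -> R) : Prop :=
  (forall s, 0 <= mu s) /\ \sum_(s : S) mu s = 1.

Definition softV (Q : S -> A -> R) (s : S) : R :=
  ln (\sum_(a : A) expR (Q s a)).

Definition soft_bellman_fixpoint (r : S -> A -> R) (g : R)
    (P : S -> A -> S -> R) (Q : S -> A -> R) : Prop :=
  forall s a, Q s a = r s a + g * \sum_(s' : S) P s a s' * softV Q s'.

Definition softmax_policy (Q : S -> A -> R) (s : S) (a : A) : R :=
  expR (Q s a) / \sum_(b : A) expR (Q s b).

Definition KL (p q : A -> R) : R :=
  \sum_(a : A) p a * ln (p a / q a).

Fixpoint state_dist (mu0 : S -> R) (pi : S -> A -> R)
    (P : S -> A -> S -> R) (t : nat) : S -> R :=
  match t with
  | 0%N => mu0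
  | t'.+1 => fun s' => \sum_(s : S) \sum_(a : A)
        state_dist mu0 pi P t' s * pi s a * P s a s'
  end.

Definition disc_state_dist (g : R) (mu0 : S -> R) (pi : S -> A -> R)
    (P : S -> A -> S -> R) (s : S) : R :=
  (1 - g) * limn (fun n => \sum_(0 <= t < n) g ^+ t * state_dist mu0 pi P t s).

Definition trans_dist (P P' : S -> A -> S -> R) : R :=
  \big[Num.max/0]_(sa : S * A) \sum_(s' : S) `|P sa.1 sa.2 s' - P' sa.1 sa.2 s'|.

End MDP.

(* Main.v *)
Require Import Defs.
From HB Require Import structures.
From mathcomp Require Import all_boot all_order all_algebra.
From mathcomp Require Import all_classical all_reals all_analysis.
From mathcomp Require Import ring lra.
Import Order.TTheory GRing.Theory Num.Theory numFieldNormedType.Exports.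
Set Implicit Arguments. Unset Strict Implicit.
Local Open Scope ring_scope.

Lemma sum_exp_gt0 (R : realType) (A : finType) (a0 : A) (f : A -> R) :
  0 < \sum_(a : A) expR (f a).
Proof.
rewrite (bigD1 a0) //=.
have h1 := expR_gt0 (f a0).
have h2 : 0 <= \sum_(a | a != a0) expR (f a) by apply: sumr_ge0 => a _; exact: expR_ge0.
lra.
Qed.

Lemma lse_le (R : realType) (A : finType) (a0 : A) (x y : A -> R) (c : R) :
  (forall a, x a <= y a + c) ->
  ln (\sum_(a : A) expR (x a)) <= ln (\sum_(a : A) expR (y a)) + c.
Proof.
move=> h.
have hx := sum_exp_gt0 a0 x; have hy := sum_exp_gt0 a0 y.
have le1 : \sum_(a : A) expR (x a) <= expR c * \sum_(a : A) expR (y a).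
  rewrite mulr_sumr; apply: ler_sum => a _.
  by rewrite -expRD ler_expR addrC.
rewrite -[X in _ <= _ + X](expRK c) -lnM ?posrE ?expR_gt0 //.
rewrite ler_ln ?posrE //; last by rewrite mulr_gt0 ?expR_gt0.
by rewrite mulrC.
Qed.

Lemma softmax_ge0 (R : realType) (S A : finType) (Q : S -> A -> R) s a :
  0 <= softmax_policy Q s a.
Proof.
rewrite /softmax_policy divr_ge0 ?expR_ge0 //.
by apply: sumr_ge0 => b _; exact: expR_ge0.
Qed.

Lemma softmax_sum1 (R : realType) (S A : finType) (a0 : A) (Q : S -> A -> R) s :
  \sum_(a : A) softmax_policy Q s a = 1.
Proof.
rewrite /softmax_policy -mulr_suml divff //.
by have := sum_exp_gt0 a0 (Q s); rewrite lt0r => /andP[].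
Qed.

Lemma KL_bound (R : realType) (S A : finType) (a0 : A) (Q Q' : S -> A -> R) s D :
  (forall a, `|Q s a - Q' s a| <= D) ->
  KL (softmax_policy Q s) (softmax_policy Q' s) <= 2 * D.
Proof.
move=> hD.
have hZ := sum_exp_gt0 a0 (Q s); have hZ' := sum_exp_gt0 a0 (Q' s).
have hl : forall a, ln (softmax_policy Q s a / softmax_policy Q' s a) <= 2 * D.
  move=> a; rewrite /softmax_policy.
  rewrite ln_div ?posrE ?divr_gt0 ?expR_gt0 //.
  rewrite !ln_div ?posrE ?expR_gt0 // !expRK.
  have := hD a; rewrite ler_norml => /andP[h1 h2].
  have h3 : ln (\sum_(b : A) expR (Q' s b)) <= ln (\sum_(b : A) expR (Q s b)) + D.
    apply: lse_le => // b; have := hD b; rewrite ler_norml => /andP[? ?]; lra.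
  lra.
rewrite /KL.
apply: le_trans (_ : \sum_(a : A) softmax_policy Q s a * (2 * D) <= _).
  apply: ler_sum => a _; apply: ler_wpM2l; [exact: softmax_ge0 | exact: hl].
by rewrite -mulr_suml (softmax_sum1 a0) mul1r.
Qed.

Lemma ex_max (R : realType) (I : finType) (i0 : I) (F : I -> R) :
  exists i, forall j, F j <= F i.
Proof.
have [i _ hi] := @arg_maxP _ R I i0 xpredT F isT.
by exists i => j; exact: hi.
Qed.

Lemma ex_min (R : realType) (I : finType) (i0 : I) (F : I -> R) :
  exists i, forall j, F i <= F j.
Proof.
have [i _ hi] := @arg_minP _ R I i0 xpredT F isT.
by exists i => j; exact: hi.
Qed.

Lemma avg_le (R : realType) (S A : finType) (P : S -> A -> S -> R)
  (hP : is_transition P) s a (f : S -> R) B :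
  (forall x, f x <= B) -> \sum_(x : S) P s a x * f x <= B.
Proof.
move=> hf; have [h0 h1] := hP s a.
apply: le_trans (_ : \sum_(x : S) P s a x * B <= _).
  by apply: ler_sum => x _; apply: ler_wpM2l.
by rewrite -mulr_suml h1 mul1r.
Qed.

Lemma avg_ge (R : realType) (S A : finType) (P : S -> A -> S -> R)
  (hP : is_transition P) s a (f : S -> R) B :
  (forall x, B <= f x) -> B <= \sum_(x : S) P s a x * f x.
Proof.
move=> hf; have [h0 h1] := hP s a.
apply: le_trans (_ : \sum_(x : S) P s a x * B <= _).
  by rewrite -mulr_suml h1 mul1r.
by apply: ler_sum => x _; apply: ler_wpM2l.
Qed.

Lemma trans_dist_ge (R : realType) (S A : finType) (P P' : S -> A -> S -> R) s a :
  \sum_(x : S) `|P s a x - P' s a x| <= trans_dist P P'.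
Proof. by rewrite /trans_dist (bigD1 (s,a)) //= le_max lexx. Qed.

Lemma span_bound (R : realType) (S A : finType) (a0 : A) (P : S -> A -> S -> R)
  (hP : is_transition P) (r : S -> A -> R) g Rmax (Q : S -> A -> R)
  (hQ : soft_bellman_fixpoint r g P Q) (hr : forall s a, `|r s a| <= Rmax)
  (hg0 : 0 < g) (hg1 : g < 1) sM sm :
  (forall x, softV Q x <= softV Q sM) -> (forall x, softV Q sm <= softV Q x) ->
  softV Q sM - softV Q sm <= 2 * Rmax / (1 - g).
Proof.
move=> hM hm.
have h : softV Q sM <= softV Q sm + (2 * Rmax + g * (softV Q sM - softV Q sm)).
  rewrite /softV; apply: lse_le => // a.
  rewrite (hQ sM a) (hQ sm a).
  have e1 := avg_le hP sM a hM.
  have e2 := avg_ge hP sm a hm.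
  have e3 : g * \sum_(x : S) P sM a x * softV Q x <= g * softV Q sM.
    by apply: ler_wpM2l => //; exact: ltW.
  have e4 : g * softV Q sm <= g * \sum_(x : S) P sm a x * softV Q x.
    by apply: ler_wpM2l => //; exact: ltW.
  have := hr sM a; have := hr sm a; rewrite !ler_norml => /andP[? ?] /andP[? ?].
  rewrite /softV in e3 e4 *. lra.
rewrite ler_pdivlMr; last lra.
nra.
Qed.

Lemma diff_bound (R : realType) (S A : finType) (P P' : S -> A -> S -> R)
  (hP : is_transition P) (hP' : is_transition P') (V : S -> R) sM sm s a :
  (forall x, V x <= V sM) -> (forall x, V sm <= V x) ->
  `|\sum_(x : S) (P s a x - P' s a x) * V x| <= trans_dist P P' * ((V sM - V sm) / 2).
Proof.
move=> hM hm.
pose c := (V sM + V sm) / 2.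
have e : \sum_(x : S) (P s a x - P' s a x) * V x =
         \sum_(x : S) (P s a x - P' s a x) * (V x - c).
  have [_ h1] := hP s a; have [_ h2] := hP' s a.
  have z : \sum_(x : S) (P s a x - P' s a x) * c = 0.
    by rewrite -mulr_suml sumrB h1 h2 subrr mul0r.
  have e' : \sum_(x : S) (P s a x - P' s a x) * (V x - c) =
     \sum_(x : S) (P s a x - P' s a x) * V x - \sum_(x : S) (P s a x - P' s a x) * c.
    by rewrite -sumrB; apply: eq_bigr => x _; ring.
  by rewrite e' z subr0.
rewrite e; apply: le_trans (ler_norm_sum _ _ _) _.
apply: le_trans (_ : \sum_(x : S) `|P s a x - P' s a x| * ((V sM - V sm) / 2) <= _).
  apply: ler_sum => x _; rewrite normrM; apply: ler_wpM2l => //.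
  rewrite ler_norml /c; have := hM x; have := hm x; lra.
rewrite -mulr_suml; apply: ler_wpM2r; last exact: trans_dist_ge.
have := hM sm; lra.
Qed.

Lemma Qdiff (R : realType) (S A : finType) (a0 : A) (s0 : S)
    (g : R) (hg0 : 0 < g) (hg1 : g < 1)
    (r : S -> A -> R) (Rmax : R) (hr : forall s a, `|r s a| <= Rmax)
    (Pstar Ptil : S -> A -> S -> R)
    (hPstar : is_transition Pstar) (hPtil : is_transition Ptil)
    (Qstar Qtil : S -> A -> R)
    (hQstar : soft_bellman_fixpoint r g Pstar Qstar)
    (hQtil : soft_bellman_fixpoint r g Ptil Qtil) :
  exists D, 0 <= D /\ (forall s a, `|Qstar s a - Qtil s a| <= D) /\
    D * (1 - g) <= g * (trans_dist Pstar Ptil * (Rmax / (1 - g))).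
Proof.
pose F := fun p : S * A => `|Qstar p.1 p.2 - Qtil p.1 p.2|.
have [p hp] := ex_max (s0, a0) F.
have [sM hM] := ex_max s0 (softV Qtil).
have [sm hm] := ex_min s0 (softV Qtil).
exists (F p); split; first exact: normr_ge0.
split; first by move=> s a; exact: (hp (s, a)).
have hV : forall x, `|softV Qstar x - softV Qtil x| <= F p.
  move=> x; rewrite ler_norml; apply/andP; split.
    have : softV Qtil x <= softV Qstar x + F p.
      rewrite /softV; apply: lse_le => // b.
      have := hp (x, b); rewrite /F /= ler_norml => /andP[? ?]; lra.
    lra.
  have : softV Qstar x <= softV Qtil x + F p.
    rewrite /softV; apply: lse_le => // b.
    have := hp (x, b); rewrite /F /= ler_norml => /andP[? ?]; lra.
  lra.
have hD0 : 0 <= trans_dist Pstar Ptil.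
  exact: le_trans (sumr_ge0 _ (fun x _ => normr_ge0 _)) (trans_dist_ge _ _ s0 a0).
have hR0 : 0 <= Rmax by exact: le_trans (normr_ge0 _) (hr s0 a0).
have hspan := span_bound a0 hPtil hQtil hr hg0 hg1 hM hm.
have hdiff := diff_bound hPstar hPtil p.1 p.2 hM hm.
have e : Qstar p.1 p.2 - Qtil p.1 p.2 =
   g * (\sum_(x : S) Pstar p.1 p.2 x * (softV Qstar x - softV Qtil x) +
        \sum_(x : S) (Pstar p.1 p.2 x - Ptil p.1 p.2 x) * softV Qtil x).
  rewrite hQstar hQtil -big_split /=.
  have -> : \sum_(x : S) Ptil p.1 p.2 x * softV Qtil x =
     \sum_(x : S) Pstar p.1 p.2 x * softV Qstar x -
     \sum_(i : S) (Pstar p.1 p.2 i * (softV Qstar i - softV Qtil i) +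
        (Pstar p.1 p.2 i - Ptil p.1 p.2 i) * softV Qtil i).
    rewrite -sumrB; apply: eq_bigr => x _; ring.
  ring.
have h1 : `|\sum_(x : S) Pstar p.1 p.2 x * (softV Qstar x - softV Qtil x)| <= F p.
  apply: le_trans (ler_norm_sum _ _ _) _.
  have [h0 _] := hPstar p.1 p.2.
  under eq_bigr => x _ do rewrite normrM (ger0_norm (h0 x)).
  exact: avg_le.
have h2 : trans_dist Pstar Ptil * ((softV Qtil sM - softV Qtil sm) / 2)
          <= trans_dist Pstar Ptil * (Rmax / (1 - g)).
  apply: ler_wpM2l => //.
  have hg : 0 < 1 - g by lra.
  move: hspan; rewrite ler_pdivlMr // => hs.
  rewrite ler_pdivlMr //.
  have -> : (softV Qtil sM - softV Qtil sm) / 2 * (1 - g) =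
     ((softV Qtil sM - softV Qtil sm) * (1 - g)) / 2 by rewrite mulrAC.
  lra.
have hFp : F p <= g * (F p + trans_dist Pstar Ptil * (Rmax / (1 - g))).
  rewrite {1}/F /= e normrM (gtr0_norm hg0); apply: ler_wpM2l; first exact: ltW.
  apply: le_trans (ler_normD _ _) _.
  have := hdiff; lra.
nra.
Qed.

Lemma sd_prob (R : realType) (S A : finType) (mu0 : S -> R) (pi : S -> A -> R)
  (P : S -> A -> S -> R) :
  is_distribution mu0 -> (forall s a, 0 <= pi s a) -> (forall s, \sum_(a : A) pi s a = 1) ->
  is_transition P -> forall t,
  (forall s, 0 <= state_dist mu0 pi P t s) /\ \sum_(s : S) state_dist mu0 pi P t s = 1.
Proof.
move=> [hm0 hm1] hpi0 hpi1 hP; elim=> [|t [IH0 IH1]] //=; split.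
  move=> s'; apply: sumr_ge0 => s _; apply: sumr_ge0 => a _.
  have [h0 _] := hP s a.
  by rewrite mulr_ge0 ?mulr_ge0.
rewrite exchange_big /= -[RHS]IH1; apply: eq_bigr => s _.
rewrite exchange_big /= -[RHS]mulr1 -(hpi1 s) mulr_sumr; apply: eq_bigr => a _.
have [_ h1] := hP s a.
by rewrite -mulr_sumr h1 mulr1.
Qed.

Lemma geo_sum (R : realType) (g : R) n :
  (1 - g) * \sum_(0 <= t < n) g ^+ t = 1 - g ^+ n.
Proof.
elim: n => [|n IH]; first by rewrite big_geq // mulr0 expr0 subrr.
rewrite big_nat_recr //= mulrDr IH exprS; ring.
Qed.

Lemma sum_lim (R : realType) (I : Type) (r : seq I) (u : I -> nat -> R) :
  (forall i, cvgn (u i)) ->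
  cvgn (fun n => \sum_(i <- r) u i n) /\
  limn (fun n => \sum_(i <- r) u i n) = \sum_(i <- r) limn (u i).
Proof.
move=> hc; elim: r => [|i r [IHc IHl]].
  under eq_fun do rewrite big_nil.
  by rewrite big_nil; split; [apply: is_cvg_cst | apply: lim_cst].
have e : (fun n => \sum_(j <- i :: r) u j n) = u i + (fun n => \sum_(j <- r) u j n).
  by apply/funext => n; rewrite big_cons.
rewrite e big_cons; split; first exact: is_cvgD.
by rewrite limD // IHl.
Qed.

Lemma w_bound (R : realType) (S A : finType) (a0 : A) (g : R) (hg0 : 0 < g) (hg1 : g < 1)
  (mu0 : S -> R) (Q : S -> A -> R) (P : S -> A -> S -> R) :
  is_distribution mu0 -> is_transition P ->
  (forall s, 0 <= disc_state_dist g mu0 (softmax_policy Q) P s) /\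
  \sum_(s : S) disc_state_dist g mu0 (softmax_policy Q) P s <= 1.
Proof.
move=> hmu hP.
have hsd := sd_prob hmu (@softmax_ge0 R S A Q) (softmax_sum1 a0 Q) hP.
pose u := fun s n => \sum_(0 <= t < n) g ^+ t * state_dist mu0 (softmax_policy Q) P t s.
have hu0 : forall s n, 0 <= u s n.
  move=> s n; apply: sumr_ge0 => t _; have [h0 _] := hsd t.
  by rewrite mulr_ge0 // exprn_ge0 // ltW.
have hsum : forall n, \sum_(s : S) u s n = \sum_(0 <= t < n) g ^+ t.
  move=> n; rewrite /u exchange_big /=; apply: eq_bigr => t _.
  have [_ h1] := hsd t; by rewrite -mulr_sumr h1 mulr1.
have hg : 0 < 1 - g by lra.
have hgeo : forall n, \sum_(0 <= t < n) g ^+ t <= (1 - g)^-1.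
  move=> n; rewrite -[X in _ <= X]mul1r ler_pdivlMr // mulrC geo_sum.
  have : 0 <= g ^+ n by rewrite exprn_ge0 // ltW.
  lra.
have hbnd : forall s n, u s n <= (1 - g)^-1.
  move=> s n; apply: le_trans (hgeo n); rewrite -hsum.
  rewrite (bigD1 s) //= lerDl; exact: sumr_ge0.
have hnd : forall s, {homo u s : n m / (n <= m)%N >-> n <= m}.
  move=> s n m nm; rewrite /u (big_cat_nat _ nm) //= lerDl.
  apply: sumr_ge0 => t _; have [h0 _] := hsd t.
  by rewrite mulr_ge0 // exprn_ge0 // ltW.
have hc : forall s, cvgn (u s).
  move=> s; apply/cvg_ex; exists (sup (range (u s))); apply: nondecreasing_cvgn => //.
  by exists (1 - g)^-1 => _ [n _ <-].
split.
  move=> s; rewrite /disc_state_dist; apply: mulr_ge0; first exact: ltW.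
  apply: limr_ge; first exact: hc.
  by apply: nearW => n; exact: hu0.
rewrite /disc_state_dist -mulr_sumr.
have [hc' hl] := sum_lim (index_enum S) hc.
rewrite -hl.
have : limn (fun n => \sum_(s <- index_enum S) u s n) <= (1 - g)^-1.
  apply: limr_le => //; apply: nearW => n.
  by rewrite hsum; exact: hgeo.
rewrite -(ler_pM2l hg) mulfV ?lt0r_neq0 //.
Qed.
Unset Implicit Arguments.
Theorem corollary1 (R : realType) (S A : finType) (a0 : A)
    (g : R) (hg0 : 0 < g) (hg1 : g < 1)
    (r : S -> A -> R) (Rmax : R) (hr : forall s a, `|r s a| <= Rmax)
    (Pstar Ptil : S -> A -> S -> R)
    (hPstar : is_transition Pstar) (hPtil : is_transition Ptil)
    (Qstar Qtil : S -> A -> R)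
    (hQstar : soft_bellman_fixpoint r g Pstar Qstar)
    (hQtil : soft_bellman_fixpoint r g Ptil Qtil)
    (mu0 : S -> R) (hmu0 : is_distribution mu0) :
  let pistar := softmax_policy Qstar in
  let pitil := softmax_policy Qtil in
  let wstar := disc_state_dist g mu0 pistar Pstar in
  \sum_(s : S) wstar s * KL (pistar s) (pitil s)
    <= (2 * #|{: A}|%:R * Rmax) / (1 - g) ^+ 2 * trans_dist Pstar Ptil.
Proof.
rewrite [X in is_true X]/=.
set pistar := softmax_policy Qstar.
set pitil := softmax_policy Qtil.
set wstar := disc_state_dist g mu0 pistar Pstar.
case: (pickP (xpredT : pred S)) => [s0 _ | hS]; last first.
  rewrite big_pred0 // /trans_dist big_pred0 ?mulr0 // => p; exact: hS p.1.
have [D [hD0 [hD hDg]]] := Qdiff a0 s0 hg0 hg1 hr hPstar hPtil hQstar hQtil.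
have [hw0 hw1] := w_bound a0 hg0 hg1 Qstar hmu0 hPstar.
have hKL : forall s, KL (pistar s) (pitil s) <= 2 * D.
  by move=> s; exact: KL_bound a0 _ _ s D (hD s).
apply: le_trans (_ : \sum_(s : S) wstar s * (2 * D) <= _).
  by apply: ler_sum => s _; apply: ler_wpM2l; [exact: hw0 | exact: hKL].
rewrite -mulr_suml.
have hg : 0 < 1 - g by lra.
have hD1 : 0 <= trans_dist Pstar Ptil.
  exact: le_trans (sumr_ge0 _ (fun x _ => normr_ge0 _)) (trans_dist_ge _ _ s0 a0).
have hR0 : 0 <= Rmax by exact: le_trans (normr_ge0 _) (hr s0 a0).
pose E := Rmax / (1 - g).
have hE : 0 <= E by rewrite /E divr_ge0 // ltW.
pose K := trans_dist Pstar Ptil * E / (1 - g).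
have hK : 0 <= K.
  rewrite /K; apply: divr_ge0; [exact: mulr_ge0 | exact: ltW].
have hDK : D <= g * K.
  by rewrite /K mulrA ler_pdivlMr // -mulrA.
have eR : (2 * #|{: A}|%:R * Rmax) / (1 - g) ^+ 2 * trans_dist Pstar Ptil
          = 2 * #|{: A}|%:R * K.
  rewrite /K /E; field; lra.
rewrite eR.
have hA : (1 : R) <= #|{: A}|%:R.
  rewrite ler1n; apply/card_gt0P; by exists a0.
have hw1' : \sum_(i : S) wstar i <= 1 := hw1.
have h1 : (\sum_(i : S) wstar i) * (2 * D) <= 2 * D.
  have : 0 <= 2 * D by lra.
  nra.
have : g * K <= #|{: A}|%:R * K by apply: ler_wpM2r => //; lra.
lra.
Qed.
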